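(* Let $\mathsf{K}$ be a quasivariety, $\mathbf{B}\in\mathsf{K}$, and $\mathbf{A}\leq\mathbf{B}$ proper and almost total. Then there exists $\theta\in\mathrm{Con}_{\mathsf{K}}(\mathbf{B})$ such that $\mathbf{A}/\theta\leq\mathbf{B}/\theta$ is full in $\mathsf{K}$.
   Context: A quasivariety is a class of similar algebras closed under isomorphic copies, subalgebras, direct products and ultraproducts. For $\mathbf{B}\in\mathsf{K}$, $\mathrm{Con}_{\mathsf{K}}(\mathbf{B})$ is the set of congruences $\theta$ of $\mathbf{B}$ with $\mathbf{B}/\theta\in\mathsf{K}$. For $\mathbf{A}\leq\mathbf{B}$, $\mathbf{A}/\theta$ denotes the subalgebra of $\mathbf{B}/\theta$ with universe $\{a/\theta : a\in A\}$. $\mathbf{A}\leq\mathbf{B}$ is almost total if $B=\mathrm{Sg}^{\mathbf{B}}(A\cup\{b\})$ for some $b\in B$. $\mathbf{A}\leq\mathbf{B}$ is full in $\mathsf{K}$ if it is proper, almost total, and for every $\theta\in\mathrm{Con}_{\mathsf{K}}(\mathbf{B})$ with $\theta\neq\mathrm{id}_B$ and every $b\in B$ there is $a\in A$ with $\langle a,b\rangle\in\theta$. *)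

(* Defs.v *)
From Stdlib Require Import ClassicalEpsilon.
From Stdlib Require Vectors.Fin.

Set Implicit Arguments.

Record signature := Signature { ops : Type; arity : ops -> nat }.

(** Algebras of a signature [S] (carrier possibly empty). *)
Record algebra (S : signature) := Algebra {
  car :> Type;
  op : forall o : ops S, (Fin.t (arity S o) -> car) -> car }.

Arguments op {S} a o args.

Section UA.
Variable S : signature.

Definition is_hom (A B : algebra S) (h : A -> B) : Prop :=
  forall o (args : Fin.t (arity S o) -> A),
    h (op A o args) = op B o (fun i => h (args i)).

Definition bijective_fun (X Y : Type) (h : X -> Y) : Prop :=
  (forall x y, h x = h y -> x = y) /\ (forall y, exists x, h x = y).

Definition subuniverse (B : algebra S) (A : B -> Prop) : Prop :=
  forall o (args : Fin.t (arity S o) -> B),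
    (forall i, A (args i)) -> A (op B o args).

Definition sub_alg (B : algebra S) (A : B -> Prop) (HA : subuniverse B A)
  : algebra S :=
  @Algebra S {x : B | A x}
    (fun o args => exist _ (op B o (fun i => proj1_sig (args i)))
                     (HA o _ (fun i => proj2_sig (args i)))).

Definition Sg (B : algebra S) (X : B -> Prop) : B -> Prop :=
  fun b => forall T : B -> Prop, subuniverse B T ->
             (forall x, X x -> T x) -> T b.

Definition prod_alg (I : Type) (F : I -> algebra S) : algebra S :=
  @Algebra S (forall i, F i)
    (fun o args => fun i => op (F i) o (fun k => args k i)).

Definition congruence (B : algebra S) (theta : B -> B -> Prop) : Prop :=
  (forall x, theta x x) /\
  (forall x y, theta x y -> theta y x) /\
  (forall x y z, theta x y -> theta y z -> theta x z) /\
  (forall o (a b : Fin.t (arity S o) -> B),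
      (forall i, theta (a i) (b i)) -> theta (op B o a) (op B o b)).

Definition qcar (B : algebra S) (theta : B -> B -> Prop) : Type :=
  {X : B -> Prop | exists b, X = theta b}.

Definition qclass (B : algebra S) (theta : B -> B -> Prop) (b : B)
  : qcar B theta :=
  exist _ (theta b) (ex_intro _ b eq_refl).

Definition qrep (B : algebra S) (theta : B -> B -> Prop) (X : qcar B theta) : B :=
  proj1_sig (constructive_indefinite_description _ (proj2_sig X)).

Definition quot_alg (B : algebra S) (theta : B -> B -> Prop) : algebra S :=
  @Algebra S (qcar B theta)
    (fun o args => @qclass B theta (op B o (fun i => @qrep B theta (args i)))).

(** A/theta as a subset of B/theta: { a/theta : a in A }. *)
Definition qsub (B : algebra S) (theta : B -> B -> Prop) (A : B -> Prop)
  : quot_alg B theta -> Prop :=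
  fun X => exists a, A a /\ proj1_sig X = theta a.

Definition ultrafilter (I : Type) (U : (I -> Prop) -> Prop) : Prop :=
  U (fun _ => True) /\
  ~ U (fun _ => False) /\
  (forall X Y : I -> Prop, U X -> (forall i, X i -> Y i) -> U Y) /\
  (forall X Y : I -> Prop, U X -> U Y -> U (fun i => X i /\ Y i)) /\
  (forall X : I -> Prop, U X \/ U (fun i => ~ X i)).

Definition ueq (I : Type) (F : I -> algebra S) (U : (I -> Prop) -> Prop)
  : prod_alg F -> prod_alg F -> Prop :=
  fun f g => U (fun i => f i = g i).

Definition ultraproduct (I : Type) (F : I -> algebra S) (U : (I -> Prop) -> Prop)
  : algebra S := quot_alg (prod_alg F) (@ueq I F U).

Definition quasivariety (K : algebra S -> Prop) : Prop :=
  (forall A B : algebra S, K A ->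
     (exists h : A -> B, is_hom A B h /\ bijective_fun h) -> K B) /\
  (forall (B : algebra S) (A : B -> Prop) (HA : subuniverse B A),
     K B -> (exists a, A a) -> K (sub_alg HA)) /\
  (forall (I : Type) (F : I -> algebra S),
     (forall i, K (F i)) -> K (prod_alg F)) /\
  (forall (I : Type) (F : I -> algebra S) (U : (I -> Prop) -> Prop),
     ultrafilter U -> (forall i, K (F i)) -> K (ultraproduct F U)).

Definition ConK (K : algebra S -> Prop) (B : algebra S)
  (theta : B -> B -> Prop) : Prop :=
  congruence B theta /\ K (quot_alg B theta).

Definition proper_sub (B : algebra S) (A : B -> Prop) : Prop :=
  subuniverse B A /\ exists b, ~ A b.

Definition almost_total (B : algebra S) (A : B -> Prop) : Prop :=
  exists b, forall c, Sg B (fun x => A x \/ x = b) c.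

Definition full (K : algebra S -> Prop) (B : algebra S) (A : B -> Prop) : Prop :=
  proper_sub B A /\ almost_total B A /\
  forall theta, ConK K B theta ->
    ~ (forall x y, theta x y <-> x = y) ->
    forall b, exists a, A a /\ theta a b.

End UA.

(* Main.v *)
Require Import Defs.
From Stdlib Require Import ClassicalEpsilon Classical FunctionalExtensionality PropExtensionality ProofIrrelevance.
From Stdlib Require Vectors.Fin.
From mathcomp Require classical_sets filter.

Section Q.
Variables (S : signature) (B : algebra S) (th : B -> B -> Prop).
Hypotheses (Hr : forall x, th x x) (Hs : forall x y, th x y -> th y x)
  (Ht : forall x y z, th x y -> th y z -> th x z).

Lemma qcar_eq (X Y : qcar B th) : proj1_sig X = proj1_sig Y -> X = Y.
Proof.
  destruct X as [X pX], Y as [Y pY]; simpl; intros ->.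
  f_equal; apply proof_irrelevance.
Qed.

Lemma class_eq x y : th x y -> qclass _ th x = qclass _ th y.
Proof.
  intros H; apply qcar_eq; simpl.
  apply functional_extensionality; intro z; apply propositional_extensionality.
  split; intro H'; eauto.
Qed.

Lemma class_eq_inv x y : qclass _ th x = qclass _ th y -> th x y.
Proof.
  intros H; apply (f_equal (@proj1_sig _ _)) in H; simpl in H.
  rewrite H; apply Hr.
Qed.

Lemma qrep_spec (X : qcar B th) : proj1_sig X = th (qrep X).
Proof.
  unfold qrep; destruct (constructive_indefinite_description _ _) as [c Hc]; simpl; exact Hc.
Qed.

Lemma qclass_qrep (X : qcar B th) : qclass _ th (qrep X) = X.
Proof. apply qcar_eq; simpl; symmetry; apply qrep_spec. Qed.

Lemma qrep_class x : th (qrep (qclass _ th x)) x.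
Proof.
  pose proof (qrep_spec (qclass _ th x)) as H; simpl in H.
  apply Hs; rewrite H; apply Hr.
Qed.

Lemma quot_op (Ho : forall o (a b : Fin.t (arity S o) -> B),
      (forall i, th (a i) (b i)) -> th (op B o a) (op B o b))
  o (c : Fin.t (arity S o) -> B) :
  op (quot_alg B th) o (fun k => qclass _ th (c k)) = qclass _ th (op B o c).
Proof.
  simpl; apply class_eq; apply Ho; intro i; apply qrep_class.
Qed.
End Q.

Lemma fin_bound {T} (R : T -> T -> Prop)
  (Rtr : forall x y z, R x y -> R y z -> R x z)
  (Rtot : forall x y, R x y \/ R y x) n (f : Fin.t n -> T) (t0 : T) :
  exists t, R t0 t /\ forall k, R (f k) t.
Proof.
  induction n as [|n IH].
  - exists t0; split; [destruct (Rtot t0 t0); auto|intro k; inversion k].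
  - destruct (IH (fun k => f (Fin.FS k))) as [t [H0 Hk]].
    destruct (Rtot t (f Fin.F1)) as [H|H].
    + exists (f Fin.F1); split; [eauto|].
      intro k; pattern k; apply Fin.caseS'; [destruct (Rtot (f Fin.F1) (f Fin.F1)); auto|].
      intro p; eauto.
    + exists t; split; auto.
      intro k; pattern k; apply Fin.caseS'; auto.
Qed.

Lemma fin_choice {X : Type} n (P : Fin.t n -> X -> Prop) :
  (forall k, exists a, P k a) -> exists f, forall k, P k (f k).
Proof.
  intro H; exists (fun k => proj1_sig (constructive_indefinite_description _ (H k))).
  intro k; exact (proj2_sig (constructive_indefinite_description _ (H k))).
Qed.

Lemma uf_fin {I : Type} (U : (I -> Prop) -> Prop) (HU : ultrafilter U) n
  (P : Fin.t n -> I -> Prop) :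
  (forall k, U (P k)) -> U (fun i => forall k, P k i).
Proof.
  destruct HU as [HT [HF [HS [HI HC]]]].
  induction n as [|n IH]; intro H.
  - apply (HS _ _ HT); intros i _ k; inversion k.
  - pose proof (HI _ _ (H Fin.F1) (IH (fun k => P (Fin.FS k)) (fun k => H (Fin.FS k)))) as H2.
    apply (HS _ _ H2); intros i [H1 H3] k; pattern k; apply Fin.caseS'; auto.
Qed.

Set Implicit Arguments.
Section CP.
Variables (S : signature) (B : algebra S) (th : B -> B -> Prop) (H : congruence B th).
Lemma cref x : th x x. Proof. apply (proj1 H). Qed.
Lemma csym x y : th x y -> th y x. Proof. apply (proj1 (proj2 H)). Qed.
Lemma ctr x y z : th x y -> th y z -> th x z. Proof. apply (proj1 (proj2 (proj2 H))). Qed.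
Lemma cop o (a b : Fin.t (arity S o) -> B) : (forall i, th (a i) (b i)) -> th (op B o a) (op B o b).
Proof. apply (proj2 (proj2 (proj2 H))). Qed.
End CP.
Arguments cref {S B th} H x.
Arguments csym {S B th} H {x y}.
Arguments ctr {S B th} H {x y z}.
Arguments cop {S B th} H {o a b}.
Unset Implicit Arguments.

Section Chain.
Variables (S : signature) (K : algebra S -> Prop) (HK : quasivariety K) (B : algebra S).

Definition cong_iso (A1 A2 : algebra S) := exists h : A1 -> A2, is_hom A1 A2 h /\ bijective_fun h.

Variable (I : Type) (i0 : I) (val : I -> B -> B -> Prop)
  (Hgood : forall i, ConK K B (val i))
  (Rtot : forall i j, (forall x y, val i x y -> val j x y) \/ (forall x y, val j x y -> val i x y)).

Definition uth x y := exists i, val i x y.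

Let Rle i j := forall x y, val i x y -> val j x y.
Let Rtr : forall i j k, Rle i j -> Rle j k -> Rle i k.
Proof. unfold Rle; auto. Qed.

Let HC i := proj1 (Hgood i).
Lemma uth_cong : congruence B uth.
Proof.
  split; [|split; [|split]].
  - intro x; exists i0; apply (cref (HC i0)).
  - intros x y [i H]; exists i; apply (csym (HC i)); auto.
  - intros x y z [i H1] [j H2].
    destruct (Rtot i j) as [H|H].
    + exists j; exact (ctr (HC j) (H _ _ H1) H2).
    + exists i; exact (ctr (HC i) H1 (H _ _ H2)).
  - intros o a b H.
    destruct (fin_choice _ (fun k i => val i (a k) (b k)) H) as [f Hf].
    destruct (@fin_bound I Rle Rtr Rtot _ f i0) as [t [_ Ht]].
    exists t; apply (cop (HC t)).
    intro k; apply (Ht k); apply Hf.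
Qed.

Definition G (X : I -> Prop) : Prop := exists i, forall j, Rle i j -> X j.

Section UP.
Variables (U : (I -> Prop) -> Prop) (HU : ultrafilter U) (HGU : forall X, G X -> U X).

Definition Fi (i : I) : algebra S := quot_alg B (val i).
Definition e (x : B) : prod_alg Fi := fun i => qclass B (val i) x.
Let UE := @ueq S I Fi U.

Let UT : U (fun _ => True). Proof. apply HU. Qed.
Let UF : ~ U (fun _ => False). Proof. apply HU. Qed.
Let US : forall X Y : I -> Prop, U X -> (forall i, X i -> Y i) -> U Y. Proof. apply HU. Qed.
Let UI : forall X Y : I -> Prop, U X -> U Y -> U (fun i => X i /\ Y i). Proof. apply HU. Qed.

Lemma UE_r x : UE x x. Proof. unfold UE, ueq; apply (US _ _ UT); auto. Qed.
Lemma UE_s x y : UE x y -> UE y x.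
Proof. unfold UE, ueq; intro H; apply (US _ _ H); auto. Qed.
Lemma UE_t x y z : UE x y -> UE y z -> UE x z.
Proof. unfold UE, ueq; intros H1 H2; apply (US _ _ (UI _ _ H1 H2)); intros i [-> ->]; auto. Qed.

Lemma key x y : uth x y <-> qclass _ UE (e x) = qclass _ UE (e y).
Proof.
  split.
  - intros [i H]; apply class_eq; [exact UE_s|exact UE_t|].
    apply HGU; exists i; intros j Hj; unfold e.
    apply class_eq; [exact (fun _ _ => csym (HC j))|exact (fun _ _ _ => ctr (HC j))|]; auto.
  - intro H; apply class_eq_inv in H; [|exact UE_r].
    apply NNPP; intro Hn; apply UF; apply (US _ _ H); intros i Hi; apply Hn.
    exists i; unfold e in Hi; apply class_eq_inv in Hi; [exact Hi|exact (cref (HC i))].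
Qed.

Lemma opU o (c : Fin.t (arity S o) -> B) :
  op (ultraproduct Fi U) o (fun k => qclass _ UE (e (c k))) = qclass _ UE (e (op B o c)).
Proof.
  simpl; apply class_eq; [exact UE_s|exact UE_t|].
  assert (H : forall k, U (fun i => qrep (qclass _ UE (e (c k))) i = e (c k) i)).
  { intro k; exact (qrep_class _ _ _ UE_r UE_s (e (c k))). }
  apply uf_fin in H; [|exact HU].
  apply (US _ _ H); intros i Hi.
  change (op (Fi i) o (fun k => qrep (qclass _ UE (e (c k))) i) = e (op B o c) i).
  assert (E: (fun k => qrep (qclass _ UE (e (c k))) i) = (fun k => qclass B (val i) (c k)))
    by (apply functional_extensionality; exact Hi).
  rewrite E; unfold Fi, e.
  apply quot_op; [exact (cref (HC i))|exact (fun _ _ => csym (HC i))|exact (fun _ _ _ => ctr (HC i))|exact (fun _ _ _ => cop (HC i))].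
Qed.

Definition Sim (Y : ultraproduct Fi U) : Prop := exists x, Y = qclass _ UE (e x).

Lemma Sim_sub : subuniverse _ Sim.
Proof.
  intros o args H.
  destruct (fin_choice _ (fun k x => args k = qclass _ UE (e x)) H) as [c Hc].
  exists (op B o c).
  replace args with (fun k => qclass _ UE (e (c k))) by (apply functional_extensionality; intro; auto).
  apply opU.
Qed.


Variable (b0 : B).
Let UC := uth_cong.
Lemma uth_K : K (quot_alg B uth).
Proof.
  destruct HK as [Hiso [Hsubk [Hprod Hup]]].
  assert (Kup : K (ultraproduct Fi U)) by (apply Hup; [exact HU | intro i; apply (Hgood i)]).
  assert (Ks : K (sub_alg Sim_sub)).
  { apply Hsubk; [exact Kup | exists (qclass _ UE (e b0)); exists b0; reflexivity]. }
  apply (Hiso _ _ Ks).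
  pose (rep := fun Y : sub_alg Sim_sub => proj1_sig (constructive_indefinite_description _ (proj2_sig Y))).
  assert (Hrep : forall Y, proj1_sig Y = qclass _ UE (e (rep Y)))
    by (intro Y; exact (proj2_sig (constructive_indefinite_description _ (proj2_sig Y)))).
  exists (fun Y => qclass B uth (rep Y)).
  split; [|split].
  - intros o args.
    pose proof (Hrep (op (sub_alg Sim_sub) o args)) as H1.
    assert (H2 : proj1_sig (op (sub_alg Sim_sub) o args) =
                 op (ultraproduct Fi U) o (fun k => qclass _ UE (e (rep (args k))))).
    { change (op (ultraproduct Fi U) o (fun k => proj1_sig (args k)) =
              op (ultraproduct Fi U) o (fun k => qclass _ UE (e (rep (args k))))).
      f_equal; apply functional_extensionality; intro k; apply Hrep. }
    rewrite opU in H2. rewrite H1 in H2. apply key in H2.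
    rewrite (quot_op _ _ _ (cref UC) (fun _ _ => csym UC) (fun _ _ _ => ctr UC) (fun _ _ _ => cop UC)).
    apply class_eq; [exact (fun _ _ => csym UC)|exact (fun _ _ _ => ctr UC)|exact H2].
  - intros Y1 Y2 H. apply class_eq_inv in H; [|exact (cref UC)]. apply key in H.
    rewrite <- !Hrep in H. destruct Y1 as [y1 p1], Y2 as [y2 p2]; simpl in H; subst.
    f_equal; apply proof_irrelevance.
  - intro X. exists (exist _ (qclass _ UE (e (qrep X))) (ex_intro _ (qrep X) eq_refl)).
    transitivity (qclass B uth (qrep X)); [|apply qclass_qrep].
    apply class_eq; [exact (fun _ _ => csym UC)|exact (fun _ _ _ => ctr UC)|].
    apply key. rewrite <- Hrep. reflexivity.
Qed.
End UP.

Lemma uth_K_all (b0 : B) : K (quot_alg B uth).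
Proof.
  assert (PF : filter.ProperFilter G).
  { constructor.
    - intros [i Hi]. exact (Hi i (fun x y h => h)).
    - constructor.
      + exists i0; intros; exact Logic.I.
      + intros X Y [i Hi] [j Hj]. destruct (Rtot i j) as [H|H].
        * exists j; intros k Hk; split; [apply Hi, (Rtr _ _ _ H Hk)|apply Hj, Hk].
        * exists i; intros k Hk; split; [apply Hi, Hk|apply Hj, (Rtr _ _ _ H Hk)].
      + intros X Y HXY [i Hi]; exists i; intros j Hj; apply HXY, Hi, Hj. }
  destruct (filter.ultraFilterLemma PF) as [U [HU HGU]].
  pose proof (@filter.ultra_proper _ _ HU) as PU.
  pose proof (@filter.filter_filter _ _ PU) as FU.
  apply (@uth_K U); [| exact HGU | exact b0].
  split; [|split; [|split; [|split]]].
  - exact (@filter.filterT _ _ FU).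
  - exact (@filter.filter_not_empty _ _ PU).
  - intros X Y HX HXY. exact (@filter.filterS _ _ FU X Y HXY HX).
  - intros X Y HX HY. exact (@filter.filterI _ _ FU X Y HX HY).
  - intro X. exact (filter.in_ultra_setVsetC X HU).
Qed.
End Chain.

Section PB.
Variables (S : signature) (K : algebra S -> Prop) (HK : quasivariety K) (B : algebra S)
  (th : B -> B -> Prop) (Hth : congruence B th)
  (th' : quot_alg B th -> quot_alg B th -> Prop) (Hth' : ConK K (quot_alg B th) th').

Definition pb x y := th' (qclass B th x) (qclass B th y).
Let C' := proj1 Hth'.
Let Q1 := quot_alg B th.

Lemma qop1 o (c : Fin.t (arity S o) -> B) :
  op Q1 o (fun k => qclass B th (c k)) = qclass B th (op B o c).
Proof. apply quot_op; [exact (cref Hth)|exact (fun _ _ => csym Hth)|exact (fun _ _ _ => ctr Hth)|exact (fun _ _ _ => cop Hth)]. Qed.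

Lemma pb_cong : congruence B pb.
Proof.
  unfold pb; split; [|split; [|split]].
  - intro x; apply (cref C').
  - intros x y H; apply (csym C' H).
  - intros x y z H1 H2; apply (ctr C' H1 H2).
  - intros o a b H. rewrite <- !qop1. apply (cop C'). exact H.
Qed.

Lemma pb_sup x y : th x y -> pb x y.
Proof.
  intro H; unfold pb.
  assert (E : qclass B th x = qclass B th y)
    by (apply class_eq; [exact (fun _ _ => csym Hth)|exact (fun _ _ _ => ctr Hth)|exact H]).
  rewrite E; apply (cref C').
Qed.

Let rr (Z : quot_alg Q1 th') : B := qrep (qrep Z).

Lemma Zeq Z : Z = qclass Q1 th' (qclass B th (rr Z)).
Proof. unfold rr; rewrite qclass_qrep, qclass_qrep; reflexivity. Qed.

Let PC := pb_cong.

Lemma h_class x : qclass B pb (rr (qclass Q1 th' (qclass B th x))) = qclass B pb x.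
Proof.
  apply class_eq; [exact (fun _ _ => csym PC)|exact (fun _ _ _ => ctr PC)|].
  unfold pb, rr. rewrite qclass_qrep.
  exact (qrep_class _ _ _ (cref C') (fun _ _ => csym C') _).
Qed.

Lemma qop2 o (z : Fin.t (arity S o) -> B) :
  op (quot_alg Q1 th') o (fun k => qclass Q1 th' (qclass B th (z k))) = qclass Q1 th' (qclass B th (op B o z)).
Proof.
  rewrite quot_op; [|exact (cref C')|exact (fun _ _ => csym C')|exact (fun _ _ _ => ctr C')|exact (fun _ _ _ => cop C')].
  rewrite qop1; reflexivity.
Qed.

Lemma pb_K : K (quot_alg B pb).
Proof.
  destruct HK as [Hiso _].
  apply (Hiso _ _ (proj2 Hth')).
  exists (fun Z => qclass B pb (rr Z)).
  split; [|split].
  - intros o args.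
    assert (E : args = fun k => qclass Q1 th' (qclass B th (rr (args k))))
      by (apply functional_extensionality; intro k; apply Zeq).
    transitivity (qclass B pb (rr (op (quot_alg Q1 th') o (fun k => qclass Q1 th' (qclass B th (rr (args k))))))).
    { f_equal. f_equal. f_equal. exact E. }
    rewrite qop2, h_class.
    symmetry; apply quot_op; [exact (cref PC)|exact (fun _ _ => csym PC)|exact (fun _ _ _ => ctr PC)|exact (fun _ _ _ => cop PC)].
  - intros Z1 Z2 H. apply class_eq_inv in H; [|exact (cref PC)].
    rewrite (Zeq Z1), (Zeq Z2). apply class_eq; [exact (fun _ _ => csym C')|exact (fun _ _ _ => ctr C')|exact H].
  - intro X. exists (qclass Q1 th' (qclass B th (qrep X))). rewrite h_class. apply qclass_qrep.
Qed.
End PB.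

Section Main.
Variables (S : signature) (K : algebra S -> Prop) (HK : quasivariety K) (B : algebra S) (HB : K B)
  (A : B -> Prop) (HA : subuniverse B A) (b : B)
  (Hgen : forall c, Sg B (fun x => A x \/ x = b) c) (Hnb : ~ A b).

Definition good (th : B -> B -> Prop) := ConK K B th /\ forall a, A a -> ~ th a b.

Lemma sat_all th : congruence B th -> (exists a, A a /\ th a b) -> forall c, exists a, A a /\ th a c.
Proof.
  intros Hc Hab c. apply (Hgen c (fun c => exists a, A a /\ th a c)).
  - intros o args H.
    destruct (fin_choice _ (fun k a => A a /\ th a (args k)) H) as [f Hf].
    exists (op B o f); split.
    + apply HA; intro k; apply Hf.
    + apply (cop Hc); intro k; apply Hf.
  - intros x [Hx| ->]; [exists x; split; [exact Hx|apply (cref Hc)]|exact Hab].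
Qed.

Lemma eq_cong : congruence B (@eq B).
Proof.
  split; [|split; [|split]]; intros; subst; auto.
  f_equal; apply functional_extensionality; auto.
Qed.

Lemma id_good : good (@eq B).
Proof.
  split; [split; [exact eq_cong|]|].
  - destruct HK as [Hiso _]. apply (Hiso _ _ HB).
    exists (qclass B (@eq B)). split; [|split].
    + intros o args. symmetry. apply quot_op; [exact (cref eq_cong)|exact (fun _ _ => csym eq_cong)|exact (fun _ _ _ => ctr eq_cong)|exact (fun _ _ _ => cop eq_cong)].
    + intros x y H. apply class_eq_inv in H; [exact H|exact (cref eq_cong)].
    + intro X. exists (qrep X). apply qclass_qrep.
  - intros a Ha ->. exact (Hnb Ha).
Qed.

Lemma zorn_max : exists th, good th /\
  forall th2, good th2 -> (forall x y, th x y -> th2 x y) -> forall x y, th2 x y -> th x y.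
Proof.
  destruct (@classical_sets.Zorn_bigcup (B * B)
      (fun X => X = classical_sets.set0 \/ good (fun x y => X (x, y)))) as [A0 [HP Hmax]].
  - intros F HF Htot.
    destruct (classic (exists X, F X /\ exists p, X p)) as [[X0 [FX0 [p0 Hp0]]]|Hn].
    + right.
      assert (HFg : forall X, F X -> (exists p, X p) -> good (fun x y => X (x, y))).
      { intros X FX [p Hp]. destruct (HF X FX) as [E|G]; [|exact G].
        rewrite E in Hp; destruct Hp. }
      pose (I := {X : classical_sets.set (B * B) | F X /\ good (fun x y => X (x, y))}).
      pose (i0 := exist (fun X => F X /\ good (fun x y => X (x, y))) X0
                    (conj FX0 (HFg X0 FX0 (ex_intro _ p0 Hp0))) : I).
      pose (val := fun (i : I) x y => proj1_sig i (x, y)).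
      assert (E : (fun x y => classical_sets.bigcup F (fun X => X) (x, y)) = uth S B I val).
      { apply functional_extensionality; intro x; apply functional_extensionality; intro y.
        apply propositional_extensionality; split.
        - intros [X FX HX]. exists (exist _ X (conj FX (HFg X FX (ex_intro _ _ HX)))). exact HX.
        - intros [i Hi]. exists (proj1_sig i); [exact (proj1 (proj2_sig i))|exact Hi]. }
      rewrite E.
      assert (Hgood : forall i : I, ConK K B (val i)) by (intro i; exact (proj1 (proj2 (proj2_sig i)))).
      assert (Rtot : forall i j : I, (forall x y, val i x y -> val j x y) \/ (forall x y, val j x y -> val i x y)).
      { intros i j. destruct (Htot (proj1_sig i) (proj1_sig j) (proj1 (proj2_sig i)) (proj1 (proj2_sig j))) as [H|H].
        - left; intros x y; apply H.
        - right; intros x y; apply H. }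
      split; [split|].
      * exact (uth_cong S K B I i0 val Hgood Rtot).
      * exact (uth_K_all S K HK B I i0 val Hgood Rtot b).
      * intros a Ha [i Hi]. exact (proj2 (proj2 (proj2_sig i)) a Ha Hi).
    + left. apply functional_extensionality; intro p; apply propositional_extensionality; split.
      * intros [X FX HX]; apply Hn; eauto.
      * intros [].
  - destruct HP as [H0|Hg].
    + exfalso. apply (Hmax (fun p => fst p = snd p)).
      * split.
        -- intros t Ht; rewrite H0 in Ht; destruct Ht.
        -- intro Hs. pose proof (Hs (b, b) eq_refl) as Hbb. rewrite H0 in Hbb; destruct Hbb.
      * right. exact id_good.
    + exists (fun x y => A0 (x, y)). split; [exact Hg|].
      intros th2 Hg2 Hsub x y H. apply NNPP; intro Hn.
      apply (Hmax (fun p => th2 (fst p) (snd p))); [split|right; exact Hg2].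
      * intros [u v] Huv; apply Hsub; exact Huv.
      * intro Hs; apply Hn; exact (Hs (x, y) H).
Qed.
End Main.

Theorem mainTheorem3 :
  forall (S : signature) (K : algebra S -> Prop),
    quasivariety K ->
    forall (B : algebra S), K B ->
    forall (A : B -> Prop),
      @proper_sub S B A -> @almost_total S B A ->
      exists theta : B -> B -> Prop,
        @ConK S K B theta /\
        @full S K (@quot_alg S B theta) (@qsub S B theta A).
Proof.
  intros S K HK B HB A [HA [b1 Hb1]] [b Hgen].
  assert (Hnb : ~ A b).
  { intro Hab. apply Hb1. apply (Hgen b1 A HA). intros x [Hx| ->]; auto. }
  destruct (zorn_max S K HK B HB A b Hnb) as [th [[[Hc HKq] Hgb] Hmax]].
  assert (Hcl : forall x y, th x y -> qclass B th x = qclass B th y).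
  { intros x y H; apply class_eq; [exact (fun _ _ => csym Hc)|exact (fun _ _ _ => ctr Hc)|exact H]. }
  assert (Hq : forall o (c : Fin.t (arity S o) -> B),
     op (quot_alg B th) o (fun k => qclass B th (c k)) = qclass B th (op B o c)).
  { intros o c; apply quot_op; [exact (cref Hc)|exact (fun _ _ => csym Hc)|exact (fun _ _ _ => ctr Hc)|exact (fun _ _ _ => cop Hc)]. }
  exists th; split; [split; auto|].
  split; [|split].
  - split.
    + intros o args H.
      destruct (fin_choice _ (fun k a => A a /\ proj1_sig (args k) = th a) H) as [f Hf].
      exists (op B o f); split; [apply HA; intro k; apply Hf|].
      assert (E : args = fun k => qclass B th (f k)).
      { apply functional_extensionality; intro k; apply qcar_eq; simpl; apply Hf. }
      rewrite E, Hq. reflexivity.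
    + exists (qclass B th b). intros [a [Ha E]]. simpl in E. apply (Hgb a Ha).
      rewrite <- E. apply (cref Hc).
  - exists (qclass B th b). intros X T HT Hsub.
    assert (Hall : forall c, T (qclass B th c)).
    { intro c. apply (Hgen c (fun c => T (qclass B th c))).
      - intros o args H. rewrite <- Hq. apply HT. exact H.
      - intros x [Hx| ->]; apply Hsub; [left; exists x; split; auto|right; reflexivity]. }
    rewrite <- (qclass_qrep _ _ _ X). apply Hall.
  - intros th' Hth' Hnid X.
    assert (Hng : ~ good S K B A b (pb S B th th')).
    { intro Hg. apply Hnid. intros x y; split; [|intros ->; apply (cref (proj1 Hth'))].
      intro H. rewrite <- (qclass_qrep _ _ _ x), <- (qclass_qrep _ _ _ y). apply Hcl.
      apply (Hmax _ Hg (pb_sup S K B th Hc th' Hth')). unfold pb. rewrite !qclass_qrep. exact H. }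
    assert (Hex : exists a, A a /\ pb S B th th' a b).
    { apply NNPP; intro Hn; apply Hng; split;
        [split; [exact (pb_cong S K B th Hc th' Hth')|exact (pb_K S K HK B th Hc th' Hth')]|].
      intros a Ha Hab; apply Hn; eauto. }
    destruct (sat_all S B A HA b Hgen _ (pb_cong S K B th Hc th' Hth') Hex (qrep X)) as [a [Ha Hax]].
    exists (qclass B th a). split; [exists a; split; [exact Ha|reflexivity]|].
    unfold pb in Hax. rewrite qclass_qrep in Hax. exact Hax.
Qed.
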